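(* For all $0\le t<1$ and $x\in\mathbb{R}$, $W^*(t,x)\ge h(t,x)$, where $$W^*(t,x)=\begin{cases}(1-t)^{q/2}G_q(|x|/\sqrt{1-t})\,w(A^* ), & |x|>A^*\sqrt{1-t},\\ h(t,x), & |x|\le A^*\sqrt{1-t}.\end{cases}$$
   Context: $q>0$. $F_q(y):=\int_0^\infty u^{q-1}e^{yu-u^2/2}\,\mathrm{d}u$ and $G_q(y):=F_q(-y)$. $D^*>0$ is the unique positive root of $q-D(F_q+G_q)'(D)/(F_q+G_q)(D)=0$. $\overline{U}(t,x)=(1-t)^{q/2}(D^* )^q(F_q+G_q)(x/\sqrt{1-t})/(F_q+G_q)(D^* )$ if $|x|<D^*\sqrt{1-t}$, and $|x|^q$ otherwise. $h(t,x)=\overline{U}(t,x)-|x|^q$ if $|x|<D^*\sqrt{1-t}$, and $0$ otherwise. $w(A):=\frac{1}{G_q(A)}[(D^* )^q(F_q+G_q)(A)/(F_q+G_q)(D^* )-A^q]$ for $0\le A\le D^*$. $A^*$ is the unique maximizer of $w$ over $[0,D^*]$. *)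

(* Defs.v *)
From Stdlib Require Import Reals.
From Coquelicot Require Import Coquelicot.
Open Scope R_scope.

(* a^p for a >= 0 and p > 0, with the convention 0^p = 0
   (Stdlib's Rpower 0 p is exp(p * ln 0) = 1, which is wrong). *)
Definition rpow (a p : R) : R := if Rle_dec a 0 then 0 else Rpower a p.

(* F_q(y) = int_0^oo u^(q-1) e^(y u - u^2/2) du  (improper at both ends,
   since u^(q-1) is unbounded near 0 when q < 1). *)
Definition Fq (q y : R) : R :=
  RInt_gen (fun u => Rpower u (q - 1) * exp (y * u - u ^ 2 / 2))
           (at_right 0) (Rbar_locally p_infty).

Definition Gq (q y : R) : R := Fq q (- y).

Definition FGq (q y : R) : R := Fq q y + Gq q y.

Definition Dstar_eq (q D : R) : Prop :=
  q - D * Derive (FGq q) D / FGq q D = 0.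

Definition Ubar (q D t x : R) : R :=
  if Rlt_dec (Rabs x) (D * sqrt (1 - t)) then
    Rpower (1 - t) (q / 2) * rpow D q * FGq q (x / sqrt (1 - t)) / FGq q D
  else rpow (Rabs x) q.

Definition hfun (q D t x : R) : R :=
  if Rlt_dec (Rabs x) (D * sqrt (1 - t)) then Ubar q D t x - rpow (Rabs x) q
  else 0.

Definition wfun (q D A : R) : R :=
  / Gq q A * (rpow D q * FGq q A / FGq q D - rpow A q).

Definition Wstar (q D A t x : R) : R :=
  if Rlt_dec (A * sqrt (1 - t)) (Rabs x) then
    Rpower (1 - t) (q / 2) * Gq q (Rabs x / sqrt (1 - t)) * wfun q D A
  else hfun q D t x.

(* Main.v *)
Require Import Defs.
From Stdlib Require Import Reals Lra.
From Coquelicot Require Import Coquelicot.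
Open Scope R_scope.

Definition ff (q y u : R) := Rpower u (q - 1) * exp (- y * u - u ^ 2 / 2).

Lemma ff_cont q y u : 0 < u -> continuous (ff q y) u.
Proof.
  intros Hu. apply (@ex_derive_continuous R_AbsRing R_NormedModule). unfold ff, Rpower.
  auto_derive. auto.
Qed.

Lemma ff_pos q y u : 0 < u -> 0 < ff q y u.
Proof. intros; unfold ff, Rpower. apply Rmult_lt_0_compat; apply exp_pos. Qed.

Lemma pw_cont q u : 0 < u -> continuous (fun u => Rpower u (q-1)) u.
Proof.
  intros Hu. apply (@ex_derive_continuous R_AbsRing R_NormedModule). unfold Rpower.
  auto_derive. auto.
Qed.

Lemma pw_int q a b : 0 < q -> 0 < a <= b ->
  is_RInt (fun u => Rpower u (q-1)) a b (Rpower b q / q - Rpower a q / q).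
Proof.
  intros Hq Hab.
  apply (is_RInt_derive (fun u => Rpower u q / q)).
  - intros x Hx. rewrite Rmin_left in Hx by lra. rewrite Rmax_right in Hx by lra.
    unfold Rpower. auto_derive. lra.
    replace ((q-1) * ln x) with (q * ln x + - ln x) by ring.
    rewrite exp_plus, exp_Ropp, exp_ln by lra. field. split; lra.
  - intros x Hx. rewrite Rmin_left in Hx by lra. rewrite Rmax_right in Hx by lra.
    apply pw_cont. lra.
Qed.

Lemma ex_int q y a b : 0 < a <= b -> ex_RInt (ff q y) a b.
Proof.
  intros Hab. apply (@ex_RInt_continuous R_CompleteNormedModule). intros z Hz.
  rewrite Rmin_left in Hz by lra. rewrite Rmax_right in Hz by lra.
  apply ff_cont; lra.
Qed.

Lemma ball_R (l e v : R) : Rabs (v - l) < e -> ball l e v.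
Proof. intros H. unfold ball; simpl; unfold AbsRing_ball, abs, minus, plus, opp; simpl. exact H. Qed.

Lemma mono_right0 (g : R -> R) (M : R) :
  (forall a b, 0 < a <= b -> b <= 1 -> g b <= g a) ->
  (forall a, 0 < a <= 1 -> g a <= M) ->
  exists l, filterlim g (at_right 0) (locally l) /\ (forall a, 0 < a <= 1 -> g a <= l).
Proof.
  intros Hm Hb.
  set (E := fun v => exists a, (0 < a <= 1) /\ v = g a).
  destruct (completeness E) as [l [Hub Hlub]].
  - exists M. intros v [a [Ha ->]]. auto.
  - exists (g 1). exists 1. split; [lra|auto].
  - exists l. split.
    + intros P [eps HP].
      assert (Hex : exists a0, (0 < a0 <= 1) /\ l - eps < g a0).
      { destruct (Rlt_or_le (l - eps) l) as [_|]; [|destruct eps; simpl in *; lra].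
        apply Classical_Prop.NNPP. intros Hn.
        assert (Hu : is_upper_bound E (l - eps)).
        { intros v [a [Ha ->]]. destruct (Rle_dec (g a) (l - eps)) as [|Hn']; auto.
          exfalso; apply Hn; exists a; split; auto; lra. }
        specialize (Hlub _ Hu). destruct eps; simpl in *; lra. }
      destruct Hex as [a0 [Ha0 Hg0]].
      exists (mkposreal a0 (proj1 Ha0)). intros y Hy Hy0.
      apply HP. apply ball_R.
      unfold ball in Hy; simpl in Hy; unfold AbsRing_ball, abs, minus, plus, opp in Hy; simpl in Hy.
      rewrite Ropp_0, Rplus_0_r in Hy.
      rewrite Rabs_right in Hy by lra.
      assert (g y <= l) by (apply Hub; exists y; split; [lra|auto]).
      assert (g a0 <= g y) by (apply Hm; lra).
      apply Rabs_def1; lra.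
    + intros a Ha. apply Hub. exists a; auto.
Qed.

Lemma mono_pinfty (g : R -> R) (M : R) :
  (forall a b, 1 <= a <= b -> g a <= g b) ->
  (forall b, 1 <= b -> g b <= M) ->
  exists l, filterlim g (Rbar_locally p_infty) (locally l) /\ (forall b, 1 <= b -> g b <= l).
Proof.
  intros Hm Hb.
  set (E := fun v => exists a, 1 <= a /\ v = g a).
  destruct (completeness E) as [l [Hub Hlub]].
  - exists M. intros v [a [Ha ->]]. auto.
  - exists (g 1). exists 1. split; [lra|auto].
  - exists l. split.
    + intros P [eps HP].
      assert (Hex : exists a0, 1 <= a0 /\ l - eps < g a0).
      { destruct (Rlt_or_le (l - eps) l) as [_|]; [|destruct eps; simpl in *; lra].
        apply Classical_Prop.NNPP. intros Hn.
        assert (Hu : is_upper_bound E (l - eps)).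
        { intros v [a [Ha ->]]. destruct (Rle_dec (g a) (l - eps)) as [|Hn']; auto.
          exfalso; apply Hn; exists a; split; auto; lra. }
        specialize (Hlub _ Hu). destruct eps; simpl in *; lra. }
      destruct Hex as [a0 [Ha0 Hg0]].
      exists a0. intros y Hy.
      apply HP. apply ball_R.
      assert (g y <= l) by (apply Hub; exists y; split; [lra|auto]).
      assert (g a0 <= g y) by (apply Hm; lra).
      apply Rabs_def1; lra.
    + intros a Ha. apply Hub. exists a; auto.
Qed.

Lemma gen_of_lim (f : R -> R) Fa Fb (l : R) {FA : Filter Fa} {FB : Filter Fb} :
  filter_prod Fa Fb (fun ab => ex_RInt f (fst ab) (snd ab)) ->
  filterlim (fun ab => RInt f (fst ab) (snd ab)) (filter_prod Fa Fb) (locally l) ->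
  is_RInt_gen f Fa Fb l.
Proof.
  intros He Hl P HP. specialize (Hl P HP). unfold filtermapi. unfold filtermap in Hl.
  generalize (filter_and _ _ He Hl). apply filter_imp.
  intros ab [H1 H2]. exists (RInt f (fst ab) (snd ab)). split; auto. apply (@RInt_correct R_CompleteNormedModule); auto.
Qed.

Lemma exp_mono x y : x <= y -> exp x <= exp y.
Proof. intros [H|H]; [left; apply exp_increasing; auto| rewrite H; lra]. Qed.

Lemma fp_left (P : R * R -> Prop) (Q : R -> Prop) :
  at_right 0 Q -> (forall a, Q a -> 0 < a <= 1 -> P (a, 1)) ->
  filter_prod (at_right 0) (at_point 1) P.
Proof.
  intros HQ H. apply (Filter_prod _ _ _ (fun a => Q a /\ 0 < a <= 1) (fun b => b = 1)).
  - apply filter_and; auto. exists (mkposreal 1 Rlt_0_1). intros z Hz Hz0.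
    unfold ball in Hz; simpl in Hz; unfold AbsRing_ball, abs, minus, plus, opp in Hz; simpl in Hz.
    rewrite Ropp_0, Rplus_0_r, Rabs_right in Hz by lra. lra.
  - reflexivity.
  - intros x z [H1 H2] ->. auto.
Qed.

Lemma fp_right (P : R * R -> Prop) (Q : R -> Prop) :
  Rbar_locally p_infty Q -> (forall b, Q b -> 1 <= b -> P (1, b)) ->
  filter_prod (at_point 1) (Rbar_locally p_infty) P.
Proof.
  intros HQ H. apply (Filter_prod _ _ _ (fun b => b = 1) (fun b => Q b /\ 1 <= b)).
  - reflexivity.
  - apply filter_and; auto. exists 1. intros; lra.
  - intros x z -> [H1 H2]. auto.
Qed.

Lemma Gq_pos_aux q y : 0 < q -> 0 <= y ->
  exists l, 0 < l /\ is_RInt_gen (ff q y) (at_right 0) (Rbar_locally p_infty) l.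
Proof.
  intros Hq Hy.
  destruct (mono_right0 (fun a => RInt (ff q y) a 1) (/ q)) as [l1 [Hl1 Hl1b]].
  { intros a b Hab Hb.
    rewrite <- (RInt_Chasles (ff q y) a b 1) by (apply ex_int; lra).
    simpl. unfold plus; simpl.
    assert (0 <= RInt (ff q y) a b).
    { apply RInt_ge_0; [lra|apply ex_int; lra|]. intros; left; apply ff_pos; lra. }
    lra. }
  { intros a Ha.
    apply Rle_trans with (RInt (fun u => Rpower u (q-1)) a 1).
    - apply RInt_le; [lra|apply ex_int; lra| |].
      + eexists; apply pw_int; auto; lra.
      + intros x Hx. unfold ff.
        rewrite <- (Rmult_1_r (Rpower x (q-1))) at 2.
        apply Rmult_le_compat_l; [unfold Rpower; left; apply exp_pos|].
        rewrite <- exp_0. apply exp_mono. nra.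
    - rewrite (is_RInt_unique _ _ _ _ (pw_int q a 1 Hq (conj (proj1 Ha) (proj2 Ha)))).
      assert (Rpower 1 q = 1) by (unfold Rpower; rewrite ln_1, Rmult_0_r, exp_0; auto).
      assert (0 < Rpower a q) by (unfold Rpower; apply exp_pos).
      rewrite H. unfold Rdiv.
      assert (0 < / q) by (apply Rinv_0_lt_compat; auto).
      assert (0 < Rpower a q * / q) by (apply Rmult_lt_0_compat; auto).
      lra. }
  set (c := Rabs (q - 1)).
  set (K := exp (c ^ 2)).
  assert (HK : 0 < K) by apply exp_pos.
  assert (Hbd : forall u, 1 <= u -> ff q y u <= K * exp (- u / 4)).
  { intros u Hu. unfold ff, Rpower, K. rewrite <- !exp_plus. apply exp_mono.
    assert (H0 : 0 <= ln u) by (rewrite <- ln_1; apply ln_le; lra).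
    assert (H1 : ln u <= u - 1).
    { generalize (exp_ineq1_le (ln u)). rewrite exp_ln by lra. lra. }
    assert (Hc : 0 <= c) by apply Rabs_pos.
    assert (H2 : (q - 1) * ln u <= c * u).
    { apply Rle_trans with (c * ln u).
      - apply Rmult_le_compat_r; auto. apply Rle_abs.
      - apply Rmult_le_compat_l; auto; lra. }
    assert (0 <= y * u) by nra.
    assert (0 <= (u/2 - c) * (u/2 - c)) by apply Rle_0_sqr.
    assert (u <= u * u) by nra.
    simpl. lra. }
  assert (Hint : forall b, 1 <= b ->
     is_RInt (fun u => K * exp (- u / 4)) 1 b (- 4 * K * exp (- b / 4) - (- 4 * K * exp (- 1 / 4)))).
  { intros b Hb.
    apply (is_RInt_derive (fun u => - 4 * K * exp (- u / 4))).
    - intros x Hx. auto_derive; auto. unfold Rdiv. field.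
    - intros x Hx. apply (@ex_derive_continuous R_AbsRing R_NormedModule). auto_derive; auto. }
  destruct (mono_pinfty (fun b => RInt (ff q y) 1 b) (4 * K)) as [l2 [Hl2 Hl2b]].
  { intros a b Hab.
    rewrite <- (RInt_Chasles (ff q y) 1 a b) by (apply ex_int; lra).
    simpl. unfold plus; simpl.
    assert (0 <= RInt (ff q y) a b).
    { apply RInt_ge_0; [lra|apply ex_int; lra|]. intros; left; apply ff_pos; lra. }
    lra. }
  { intros b Hb.
    apply Rle_trans with (RInt (fun u => K * exp (- u / 4)) 1 b).
    - apply RInt_le; [lra|apply ex_int; lra| |].
      + eexists; apply Hint; auto.
      + intros x Hx. apply Hbd. lra.
    - rewrite (is_RInt_unique _ _ _ _ (Hint b Hb)).
      assert (0 < exp (- b / 4)) by apply exp_pos.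
      assert (exp (- 1/4) <= 1) by (rewrite <- exp_0; apply exp_mono; lra).
      nra. }
  assert (Hpos2 : 0 < l2).
  { apply Rlt_le_trans with (RInt (ff q y) 1 2); [|apply Hl2b; lra].
    apply RInt_gt_0; [lra| |].
    - intros; apply ff_pos; lra.
    - intros; apply ff_cont; lra. }
  assert (Hpos1 : 0 <= l1).
  { apply Rle_trans with (RInt (ff q y) 1 1); [|apply Hl1b; lra].
    rewrite RInt_point. right; reflexivity. }
  exists (plus l1 l2). split.
  { unfold plus; simpl. lra. }
  apply (@is_RInt_gen_Chasles R_NormedModule _ _ _ _ _ 1).
  - refine (gen_of_lim _ _ _ _ _ _).
    + apply (fp_left _ (fun _ => True)); [apply filter_true|].
      intros a _ Ha. simpl. apply ex_int; lra.
    + intros P HP. apply (fp_left _ (fun a => P (RInt (ff q y) a 1))).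
      * apply Hl1. auto.
      * intros a Ha _. simpl. auto.
  - refine (gen_of_lim _ _ _ _ _ _).
    + apply (fp_right _ (fun _ => True)); [apply filter_true|].
      intros b _ Hb. simpl. apply ex_int; lra.
    + intros P HP. apply (fp_right _ (fun b => P (RInt (ff q y) 1 b))).
      * apply Hl2. auto.
      * intros b Hb _. simpl. auto.
Qed.

Lemma Gq_pos q y : 0 < q -> 0 <= y -> 0 < Gq q y.
Proof.
  intros Hq Hy. destruct (Gq_pos_aux q y Hq Hy) as [l [Hl HI]].
  unfold Gq, Fq. rewrite (is_RInt_gen_unique _ l); auto.
Qed.

Lemma FGq_even q z : FGq q (- z) = FGq q z.
Proof. unfold FGq, Gq. rewrite Ropp_involutive. ring. Qed.

Theorem lemma5p3 (q Ds As : R) :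
  0 < q ->
  (* Ds = D^*, the unique positive root *)
  0 < Ds -> Dstar_eq q Ds ->
  (forall D, 0 < D -> Dstar_eq q D -> D = Ds) ->
  (* As = A^*, the unique maximizer of w over [0, D^*] *)
  0 <= As <= Ds ->
  (forall A, 0 <= A <= Ds -> wfun q Ds A <= wfun q Ds As) ->
  (forall A, 0 <= A <= Ds -> wfun q Ds As <= wfun q Ds A -> A = As) ->
  forall t x : R, 0 <= t < 1 ->
    Wstar q Ds As t x >= hfun q Ds t x.
Proof.
  intros Hq HD HDeq _ HA Hmax _ t x Ht.
  assert (HFD : FGq q Ds <> 0).
  { intros H0. unfold Dstar_eq in HDeq. rewrite H0 in HDeq.
    unfold Rdiv in HDeq. rewrite Rinv_0, Rmult_0_r in HDeq. lra. }
  set (s := sqrt (1 - t)).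
  assert (Hs : 0 < s) by (apply sqrt_lt_R0; lra).
  set (P := Rpower (1 - t) (q / 2)).
  assert (HP : 0 < P) by (unfold P, Rpower; apply exp_pos).
  unfold Wstar. fold s. fold P.
  destruct (Rlt_dec (As * s) (Rabs x)) as [Hlt|Hge]; [|lra].
  assert (HAs0 : 0 <= As * s) by (apply Rmult_le_pos; lra).
  set (yv := Rabs x / s).
  assert (Hyv : As < yv).
  { unfold yv. apply Rmult_lt_reg_r with s; auto. unfold Rdiv.
    rewrite Rmult_assoc, Rinv_l, Rmult_1_r by lra. lra. }
  assert (Hxs : Rabs x = s * yv) by (unfold yv; field; lra).
  assert (HG : 0 < Gq q yv) by (apply Gq_pos; lra).
  unfold hfun. fold s.
  destruct (Rlt_dec (Rabs x) (Ds * s)) as [Hin|Hout].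
  - unfold Ubar. fold s. fold P.
    destruct (Rlt_dec (Rabs x) (Ds * s)) as [_|Hc]; [|contradiction].
    assert (Hyd : yv <= Ds).
    { left. apply Rmult_lt_reg_l with s; auto. lra. }
    assert (Hw := Hmax yv (conj (Rlt_le _ _ (Rle_lt_trans _ _ _ (proj1 HA) Hyv)) Hyd)).
    assert (HFx : FGq q (x / s) = FGq q yv).
    { unfold yv. destruct (Rcase_abs x) as [Hn|Hp].
      - rewrite Rabs_left by auto. unfold Rdiv. rewrite <- Ropp_mult_distr_l.
        rewrite FGq_even. reflexivity.
      - rewrite Rabs_right by auto. reflexivity. }
    rewrite HFx.
    assert (Hrx : rpow (Rabs x) q = P * rpow yv q).
    { unfold rpow. destruct (Rle_dec (Rabs x) 0); [lra|].
      destruct (Rle_dec yv 0); [lra|].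
      rewrite Hxs, <- Rpower_mult_distr by lra.
      unfold s, P. rewrite <- Rpower_sqrt by lra. rewrite Rpower_mult.
      f_equal. f_equal. field. }
    rewrite Hrx.
    unfold wfun in Hw |- *.
    set (w0 := / Gq q As * (rpow Ds q * FGq q As / FGq q Ds - rpow As q)) in *.
    set (Z := rpow Ds q * FGq q yv / FGq q Ds - rpow yv q) in *.
    assert (HGw : Gq q yv * (/ Gq q yv * Z) = Z) by (field; lra).
    assert (Gq q yv * (/ Gq q yv * Z) <= Gq q yv * w0) by (apply Rmult_le_compat_l; lra).
    assert (P * Z <= P * (Gq q yv * w0)) by (apply Rmult_le_compat_l; lra).
    unfold Z in *.
    apply Rle_ge.
    replace (P * Gq q yv * w0) with (P * (Gq q yv * w0)) by ring.
    eapply Rle_trans; [|eassumption]. right. unfold Rdiv. ring.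
  - assert (Hw := Hmax Ds (conj (Rlt_le _ _ HD) (Rle_refl _))).
    assert (Hw0 : wfun q Ds Ds = 0).
    { unfold wfun. unfold Rdiv. rewrite Rmult_assoc, Rinv_r, Rmult_1_r by auto. ring. }
    rewrite Hw0 in Hw.
    apply Rle_ge. apply Rmult_le_pos; [|lra].
    apply Rmult_le_pos; lra.
Qed.
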